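(* Let $L$ be an i--lattice. If ${\rm Con}(L)$ is a chain, then ${\rm Con}_{\mathbb{I}}(L)={\rm Con}(L)$.
   Context: An i--lattice is a lattice $L$ with a unary operation $'$ such that $a''=a$ and $a\leq b$ implies $b'\leq a'$ for all $a,b\in L$. ${\rm Con}(L)$ is the lattice of lattice congruences of $L$, and ${\rm Con}_{\mathbb{I}}(L)$ is the set of lattice congruences $\theta$ that also preserve the involution, i.e. $(a,b)\in\theta$ implies $(a',b')\in\theta$. *)

(* Defs.v *)
From HB Require Import structures.
From mathcomp Require Import all_boot all_order.
Set Implicit Arguments. Unset Strict Implicit. Unset Printing Implicit Defensive.
Import Order.TTheory.
Local Open Scope order_scope.

Definition is_ilattice_inv (d : Order.disp_t) (L : latticeType d) (inv : L -> L) : Prop :=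
  (forall a : L, inv (inv a) = a) /\ (forall a b : L, a <= b -> inv b <= inv a).

Definition is_lattice_congruence (d : Order.disp_t) (L : latticeType d)
  (theta : L -> L -> Prop) : Prop :=
  [/\ (forall a, theta a a),
      (forall a b, theta a b -> theta b a),
      (forall a b c, theta a b -> theta b c -> theta a c),
      (forall a b c e, theta a b -> theta c e -> theta (a `&` c) (b `&` e)) &
      (forall a b c e, theta a b -> theta c e -> theta (a `|` c) (b `|` e))].

Definition Con_is_chain (d : Order.disp_t) (L : latticeType d) : Prop :=
  forall theta phi : L -> L -> Prop,
    is_lattice_congruence theta -> is_lattice_congruence phi ->
    (forall a b, theta a b -> phi a b) \/ (forall a b, phi a b -> theta a b).

Definition preserves_inv (d : Order.disp_t) (L : latticeType d) (inv : L -> L)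
  (theta : L -> L -> Prop) : Prop :=
  forall a b, theta a b -> theta (inv a) (inv b).

Definition in_ConI (d : Order.disp_t) (L : latticeType d) (inv : L -> L)
  (theta : L -> L -> Prop) : Prop :=
  is_lattice_congruence theta /\ preserves_inv inv theta.

(* Main.v *)
Require Import Defs.
From mathcomp Require Import all_boot all_order.
Import Order.TTheory.
Local Open Scope order_scope.
Set Implicit Arguments. Unset Strict Implicit.

Lemma inv_swapl (d : Order.disp_t) (L : latticeType d) (inv : L -> L) :
  is_ilattice_inv inv -> forall x y : L, inv y <= x -> inv x <= y.
Proof. by move=> [invK invA] x y h; rewrite -(invK y); apply: invA. Qed.

Lemma inv_swapr (d : Order.disp_t) (L : latticeType d) (inv : L -> L) :
  is_ilattice_inv inv -> forall x y : L, y <= inv x -> x <= inv y.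
Proof. by move=> [invK invA] x y h; rewrite -(invK x); apply: invA. Qed.

Lemma inv_meet (d : Order.disp_t) (L : latticeType d) (inv : L -> L) :
  is_ilattice_inv inv -> forall a c : L, inv (a `&` c) = inv a `|` inv c.
Proof.
move=> hi a c; have [invK invA] := hi; apply/le_anti/andP; split.
  apply: (inv_swapl hi); rewrite lexI; apply/andP; split.
    by apply: (inv_swapl hi); rewrite leUl.
  by apply: (inv_swapl hi); rewrite leUr.
by rewrite leUx; apply/andP; split; apply: invA; rewrite ?leIl ?leIr.
Qed.

Lemma inv_join (d : Order.disp_t) (L : latticeType d) (inv : L -> L) :
  is_ilattice_inv inv -> forall a c : L, inv (a `|` c) = inv a `&` inv c.
Proof.
move=> hi a c; have [invK invA] := hi; apply/le_anti/andP; split.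
  by rewrite lexI; apply/andP; split; apply: invA; rewrite ?leUl ?leUr.
apply: (inv_swapr hi); rewrite leUx; apply/andP; split.
  by apply: (inv_swapr hi); rewrite leIl.
by apply: (inv_swapr hi); rewrite leIr.
Qed.

Theorem corollary4p7 (d : Order.disp_t) (L : latticeType d) (inv : L -> L) :
  is_ilattice_inv inv -> Con_is_chain L ->
  forall theta : L -> L -> Prop,
    in_ConI inv theta <-> is_lattice_congruence theta.
Proof.
move=> hinv hch theta; split; first by case.
move=> hc; split=> //.
have hc' : is_lattice_congruence (fun a b => theta (inv a) (inv b)).
  case: hc => r s t m j; split.
  - by move=> a; apply: r.
  - by move=> a b; apply: s.
  - by move=> a b c; apply: t.
  - by move=> a b c e h1 h2; rewrite !(inv_meet hinv); apply: j.
  - by move=> a b c e h1 h2; rewrite !(inv_join hinv); apply: m.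
case: (hch _ _ hc hc') => H a b hab; first exact: H.
apply: H; case: hinv => invK _; by rewrite !invK.
Qed.
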